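(* There exists a countable nilpotent group $G$ of nilpotency class $2$ such that the subgroup conjugacy relation of $G$ on $\mathrm{Sub}(G)$ is not smooth.
   Context: For a countable group $G$, $\mathrm{Sub}(G)$ is the set of subgroups of $G$ with the (Polish) topology inherited from $2^G=\{0,1\}^G$. The subgroup conjugacy relation is the equivalence relation on $\mathrm{Sub}(G)$ given by $H\sim L$ iff $gHg^{-1}=L$ for some $g\in G$. A Borel equivalence relation $E$ on a standard Borel space $X$ is smooth if there is a Borel map $f$ from $X$ to a standard Borel space with $x\mathrel{E}y\iff f(x)=f(y)$. *)

(* Defs.v *)
From mathcomp Require Import all_boot.
From mathcomp Require Import boolp classical_sets measurable_structure.
Set Implicit Arguments. Unset Strict Implicit. Unset Printing Implicit Defensive.
Local Open Scope classical_set_scope.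

Definition is_group (G : Type) (mul : G -> G -> G) (inv : G -> G) (one : G) : Prop :=
  [/\ (forall x y z, mul x (mul y z) = mul (mul x y) z),
      (forall x, mul one x = x), (forall x, mul x one = x),
      (forall x, mul (inv x) x = one) & (forall x, mul x (inv x) = one)].

Definition commutator (G : Type) (mul : G -> G -> G) (inv : G -> G) (x y : G) : G :=
  mul (mul (inv x) (inv y)) (mul x y).

Definition nilpotent_class2 (G : Type) (mul : G -> G -> G) (inv : G -> G) : Prop :=
  (forall x y z, mul (commutator mul inv x y) z = mul z (commutator mul inv x y)) /\
  (exists x y, mul x y <> mul y x).

Definition cylinders (X : Type) : set (set (X -> bool)) :=
  [set A | exists x b, A = [set S | S x = b]].

(* Borel sigma-algebra of the product (Cantor-type) space 2^X for countable X:
   it is generated by the cylinders. *)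
Definition borel2 (X : Type) : set (set (X -> bool)) := <<s @cylinders X >>.

Definition is_subgroup (G : Type) (mul : G -> G -> G) (inv : G -> G) (one : G)
  (S : G -> bool) : Prop :=
  S one /\ (forall x y, S x -> S y -> S (mul x (inv y))).

Definition Sub (G : Type) (mul : G -> G -> G) (inv : G -> G) (one : G) : set (G -> bool) :=
  [set S | is_subgroup mul inv one S].

Definition borel_Sub (G : Type) (mul : G -> G -> G) (inv : G -> G) (one : G)
  (A : set (G -> bool)) : Prop :=
  exists B, borel2 B /\ A = B `&` Sub mul inv one.

(* Subgroup conjugacy: H ~ L iff g H g^-1 = L for some g,
   i.e. x \in L <-> g^-1 x g \in H. *)
Definition subgroup_conj (G : Type) (mul : G -> G -> G) (inv : G -> G)
  (H L : G -> bool) : Prop :=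
  exists g, forall x, L x = H (mul (mul (inv g) x) g).

(* Smoothness of the subgroup conjugacy relation: a Borel reduction to equality
   on the standard Borel space 2^nat (Cantor space). *)
Definition conj_smooth (G : Type) (mul : G -> G -> G) (inv : G -> G) (one : G) : Prop :=
  exists f : (G -> bool) -> (nat -> bool),
    (forall B, borel2 B -> borel_Sub mul inv one (Sub mul inv one `&` f @^-1` B)) /\
    (forall H L, Sub mul inv one H -> Sub mul inv one L ->
       (subgroup_conj mul inv H L <-> f H = f L)).

(* Main.v *)
Require Import Defs.
From mathcomp Require Import all_boot.
From mathcomp Require Import boolp classical_sets measurable_structure.
From mathcomp Require Import zify.
From Stdlib Require Import PeanoNat Classical_Prop.
Set Implicit Arguments. Unset Strict Implicit.
Local Open Scope classical_set_scope.
Definition C := nat -> bool.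
Definition nbhd (x : C) (n : nat) : set C := fun z => forall i, (i < n)%N -> z i = x i.
Definition nwd (D : set C) := forall (x : C) n, exists (y : C) m, (n <= m)%N /\
  (forall i, (i < n)%N -> y i = x i) /\ (forall z, nbhd y m z -> ~ D z).
Definition meager (M : set C) := exists D : nat -> set C,
  (forall k, nwd (D k)) /\ (forall z, M z -> exists k, D k z).
Definition openC (U : set C) := forall x, U x -> exists n, forall z, nbhd x n z -> U z.
Definition BP (A : set C) := exists U, openC U /\ meager (fun z => ~ (A z <-> U z)).

Lemma meager_sub (M M' : set C) : (forall z, M z -> M' z) -> meager M' -> meager M.
Proof. move=> H [D [HD HM]]; exists D; split=> // z /H; exact: HM. Qed.

Lemma nwd0 : nwd (fun _ => False).
Proof. move=> x n; exists x, n; split=> //; split=> // z _ []. Qed.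

Lemma meager0 : meager (fun _ => False).
Proof. exists (fun _ _ => False); split=> //; exact: (fun _ => nwd0). Qed.

Lemma meager_union (M : nat -> set C) : (forall k, meager (M k)) ->
  meager (fun z => exists k, M k z).
Proof.
move=> H; have [D HD] := choice H.
exists (fun n => match (pickle_inv n : option (nat * nat)) with
                 | Some (k, j) => D k j | None => fun _ => False end); split.
  move=> n; case: (pickle_inv n) => [[k j]|]; last exact: nwd0.
  by case: (HD k) => + _; apply.
move=> z [k /(proj2 (HD k)) [j Hj]]; exists (pickle (k, j)); by rewrite pickleK_inv.
Qed.

Lemma nwd_meager (D : set C) : nwd D -> meager D.
Proof. by move=> H; exists (fun _ => D); split=> // z Hz; exists 0. Qed.

Lemma baire (M : set C) : meager M -> exists x, ~ M x.
Proof.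
move=> [D [HD HM]].
have H : forall kx : nat * (C * nat), exists ym : C * nat,
    (kx.2.2 < ym.2)%N /\ (forall i, (i < kx.2.2)%N -> ym.1 i = kx.2.1 i) /\
    (forall z, nbhd ym.1 ym.2 z -> ~ D kx.1 z).
  move=> [k [x n]] /=; have [y [m [h1 [h2 h3]]]] := HD k x n.
  exists (y, m.+1) => /=; split; first by lia.
  split=> // z hz; apply: h3 => i hi; apply: hz; lia.
have [st Hst] := choice H.
pose F := fix F k := if k is k'.+1 then st (k', F k') else ((fun _ : nat => false), 0%N).
have Fk : forall k, F k.+1 = st (k, F k) by []. clearbody F.
have Fn : forall k, (k <= (F k).2)%N.
  elim=> [//|k IH]; rewrite Fk; have := (Hst (k, F k)).1 => /=; move=> h; move: IH h; set a := (F k).2; set b := (st _).2; lia.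
have Fmon : forall k d, ((F k).2 <= (F (k + d)).2)%N.
  move=> k; elim=> [|d IH]; first by rewrite addn0.
  rewrite addnS Fk; have := (Hst (k + d, F (k + d))).1 => /=; move=> h; move: IH h; set a := (F (k + d)).2; set b := (st _).2; lia.
have Fag : forall k d i, (i < (F k).2)%N -> (F (k + d)).1 i = (F k).1 i.
  move=> k; elim=> [|d IH] i hi; first by rewrite addn0.
  rewrite addnS Fk (proj1 (proj2 (Hst (k + d, F (k + d))))) /=; first exact: IH.
  exact: leq_trans hi (Fmon k d).
pose z : C := fun i => (F i.+1).1 i.
have Hz : forall k, nbhd (F k).1 (F k).2 z.
  move=> k i hi; rewrite /z.
  case: (leqP i.+1 k) => hk.
    have -> : k = i.+1 + (k - i.+1) by lia.
    rewrite Fag //; have := Fn i.+1; lia.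
  have -> : i.+1 = k + (i.+1 - k) by lia.
  by rewrite Fag.
exists z => /HM [k Dk].
apply: ((proj2 (proj2 (Hst (k, F k)))) z) => //=.
by rewrite -Fk; apply: Hz.
Qed.

Lemma not_meagerT : ~ meager (fun _ => True).
Proof. by move=> /baire [x]; apply. Qed.

Lemma BP_ext (A A' : set C) : (forall z, A z <-> A' z) -> BP A -> BP A'.
Proof.
move=> H [U [oU mU]]; exists U; split=> //; apply: meager_sub mU => z hz hz'.
apply: hz; rewrite -(H z); exact: hz'.
Qed.

Lemma BP_open (U : set C) : openC U -> BP U.
Proof. move=> oU; exists U; split=> //; apply: meager_sub meager0 => z; apply; done. Qed.

Lemma BP_compl (A : set C) : BP A -> BP (fun z => ~ A z).
Proof.
move=> [U [oU mU]].
pose W : set C := fun x => exists n, forall z, nbhd x n z -> ~ U z.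
have oW : openC W.
  move=> x [n hn]; exists n => z hz; exists n => y hy; apply: hn => i hi.
  by rewrite hy // hz.
have nB : nwd (fun z => ~ U z /\ ~ W z).
  move=> x n; case: (pselect (exists y, nbhd x n y /\ U y)) => [[y [hy uy]]|hno].
    have [m hm] := oU y uy; exists y, (maxn n m); split; first exact: leq_maxl.
    split=> [i hi|z hz [nu _]]; first exact: hy.
    apply: nu; apply: hm => i hi; apply: hz; have := leq_maxr n m; lia.
  exists x, n; split=> //; split=> // z hz [_ nw]; apply: nw; exists n => y hy uy.
  apply: hno; exists y; split=> // i hi; by rewrite hy // hz.
exists W; split=> //.
have [D [HD HM]] := mU.
exists (fun k => if k is k'.+1 then D k' else (fun z => ~ U z /\ ~ W z)); split.
  by case.
move=> z hz; case: (pselect (U z)) => uz.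
  have [k hk] : exists k, D k z.
    apply: HM => h; apply: hz; split=> [na|[n hn]]; last by exfalso; apply: (hn z).
    by exfalso; apply: na; apply/h.
  by exists k.+1.
case: (pselect (W z)) => wz; last by exists 0.
have [k hk] : exists k, D k z.
  apply: HM => h; apply: hz; split=> [_|_ az]; first exact: wz.
  by apply: uz; apply/h.
by exists k.+1.
Qed.

Lemma BP_union (A : nat -> set C) : (forall k, BP (A k)) -> BP (fun z => exists k, A k z).
Proof.
move=> H; have [U HU] := choice H.
exists (fun z => exists k, U k z); split.
  move=> x [k uk]; have [n hn] := (proj1 (HU k)) x uk; exists n => z hz; exists k.
  exact: hn.
apply: meager_sub (meager_union (fun k => proj2 (HU k))) => z hz.
apply: NNPP => hno; apply: hz; split=> -[k hk]; exists k.
  apply: NNPP => nu; apply: hno; exists k => h; apply: nu; exact: (proj1 h hk).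
apply: NNPP => nu; apply: hno; exists k => h; apply: nu; exact: (proj2 h hk).
Qed.

Definition tau (p : nat) (x : C) : C := fun i => xorb (x i) (Nat.testbit p i).

Lemma tauK p x : tau p (tau p x) = x.
Proof. by apply: funext => i; rewrite /tau; case: (x i); case: (Nat.testbit p i). Qed.

Lemma nwd_tau p D : nwd D -> nwd (fun z => D (tau p z)).
Proof.
move=> H x n; have [y [m [h1 [h2 h3]]]] := H (tau p x) n.
exists (tau p y), m; split=> //; split.
  by move=> i hi; rewrite /tau h2 // /tau; case: (x i); case: (Nat.testbit p i).
move=> z hz; apply: h3 => i hi; rewrite /tau hz // /tau.
by case: (y i); case: (Nat.testbit p i).
Qed.

Lemma meager_tau p M : meager M -> meager (fun z => M (tau p z)).
Proof.
move=> [D [HD HM]]; exists (fun k z => D k (tau p z)); split.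
  by move=> k; apply: nwd_tau.
by move=> z /HM.
Qed.

Lemma pattern (w : C) n : exists p, forall i, (i < n)%N -> Nat.testbit p i = w i.
Proof.
elim: n => [|n [p hp]]; first by exists 0.
case E: (Nat.testbit p n == w n).
  exists p => i hi; case: (ltnP i n) => h; first exact: hp.
  have -> : i = n by lia.
  exact/eqP.
exists (Nat.lxor p (2 ^ n)) => i hi; rewrite Nat.lxor_spec Nat.pow2_bits_eqb.
case: (ltnP i n) => h.
  rewrite hp //; have -> : (n =? i) = false by apply/Nat.eqb_neq; lia.
  by case: (w i).
have -> : i = n by lia.
rewrite Nat.eqb_refl; move: E; case: (Nat.testbit p n); case: (w n) => //.
Qed.

Lemma zero_one (A : set C) : BP A -> (forall p x, A x -> A (tau p x)) ->
  meager A \/ meager (fun z => ~ A z).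
Proof.
move=> [U [oU mU]] inv.
case: (pselect (exists x, U x)) => [[x ux]|nU].
  right; have [n hn] := oU x ux.
  have mE : meager (fun z => nbhd x n z /\ ~ A z).
    apply: meager_sub mU => z [hz na] h; apply: na; apply/h; exact: hn.
  apply: meager_sub (meager_union (fun p => meager_tau p mE)) => z az.
  have [p hp] := pattern (fun i => xorb (z i) (x i)) n.
  exists p; split.
    by move=> i hi; rewrite /tau hp //; case: (z i); case: (x i).
  by move=> /(inv p); rewrite tauK.
left; apply: meager_sub mU => z az h; apply: nU; exists z; exact: (proj1 h az).
Qed.
Definition T3 := (nat * nat * nat)%type.
Definition gmul (x y : T3) : T3 :=
  let: (a, b, c) := x in let: (a', b', c') := y in
  (Nat.lxor a a', Nat.lxor b b', Nat.lxor (Nat.lxor c c') (Nat.land b a')).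
Definition ginv (x : T3) : T3 := let: (a, b, c) := x in (a, b, Nat.lxor c (Nat.land b a)).
Definition gone : T3 := (0, 0, 0).

Lemma triple_ext (a b c a' b' c' : nat) :
  (forall i, Nat.testbit a i = Nat.testbit a' i) ->
  (forall i, Nat.testbit b i = Nat.testbit b' i) ->
  (forall i, Nat.testbit c i = Nat.testbit c' i) -> (a, b, c) = (a', b', c').
Proof. by move=> h1 h2 h3; rewrite (Nat.bits_inj _ _ h1) (Nat.bits_inj _ _ h2) (Nat.bits_inj _ _ h3). Qed.

Ltac bits := repeat match goal with
  | |- context [Nat.testbit ?x ?i] => destruct (Nat.testbit x i)
  | |- context [?f ?j] => is_var f; lazymatch type of f with
       | nat -> bool => destruct (f j) | C => destruct (f j) end
  end.
Ltac simplb := repeat (rewrite ?Nat.lxor_spec ?Nat.land_spec ?Nat.bits_0).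
Ltac tsolve := apply: triple_ext => i; simplb; bits; reflexivity.

Lemma tb_big n i : (n <= i)%N -> Nat.testbit n i = false.
Proof.
move=> h; case: n h => [|n] h; first exact: Nat.bits_0.
apply: Nat.bits_above_log2; have := Nat.log2_lt_lin n.+1; lia.
Qed.

Definition phi (x : C) (s : T3) : bool :=
  let: (a, b, c) := s in
  (b == 0)%N && all (fun i => Nat.testbit c i == (Nat.testbit a i && x i)) (iota 0 (a + c)).

Arguments phi : simpl never.

Lemma phiP x a b c : phi x (a, b, c) <->
  b = 0 /\ forall i, Nat.testbit c i = Nat.testbit a i && x i.
Proof.
rewrite /phi; split.
  move=> /andP[/eqP -> /allP H]; split=> // i.
  case: (ltnP i (a + c)) => hi.
    by apply/eqP/H; rewrite mem_iota.
  by rewrite !tb_big //; lia.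
move=> [-> H]; apply/andP; split=> //; apply/allP => i _; exact/eqP/H.
Qed.

Lemma is_group_g : is_group gmul ginv gone.
Proof.
split.
- by move=> [[a b] c] [[a' b'] c'] [[a'' b''] c''] /=; tsolve.
- by move=> [[a b] c] /=; tsolve.
- by move=> [[a b] c] /=; tsolve.
- by move=> [[a b] c] /=; tsolve.
- by move=> [[a b] c] /=; tsolve.
Qed.

Lemma nil2 : nilpotent_class2 gmul ginv.
Proof.
split.
  by move=> [[a b] c] [[a' b'] c'] [[a'' b''] c''] /=; tsolve.
by exists (1, 0, 0), (0, 1, 0).
Qed.

Lemma phi_sub x : Defs.Sub gmul ginv gone (phi x).
Proof.
split; first by apply/phiP; split=> // i; simplb.
move=> [[a b] c] [[a' b'] c'] /phiP [hb hc] /phiP [hb' hc'] /=; subst.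
apply/phiP; split; first by apply: Nat.bits_inj => i; simplb.
by move=> i; simplb; rewrite hc hc'; bits.
Qed.

Lemma conj_formula a b c a' b' c' :
  gmul (gmul (ginv (a', b', c')) (a, b, c)) (a', b', c') =
  (a, b, Nat.lxor (Nat.lxor c (Nat.land b' a)) (Nat.land b a')).
Proof. by rewrite /=; tsolve. Qed.

Lemma conj_tau p x : subgroup_conj gmul ginv (phi x) (phi (tau p x)).
Proof.
exists (0, p, 0) => -[[a b] c]; rewrite conj_formula.
apply/idP/idP => /phiP [-> H]; apply/phiP; split=> // i; move: (H i); rewrite /tau; simplb; bits. all: done.
Qed.

Lemma conj_fin x y : subgroup_conj gmul ginv (phi x) (phi y) ->
  exists N, forall i, (N <= i)%N -> x i = y i.
Proof.
move=> [[[a' b'] c'] H]; exists b' => i hi.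
pose cc := if y i then 2 ^ i else 0.
have hcc : Nat.testbit cc i = y i.
  by rewrite /cc; case: (y i); rewrite ?Nat.pow2_bits_eqb ?Nat.eqb_refl ?Nat.bits_0.
have : phi y (2 ^ i, 0, cc).
  apply/phiP; split=> // j; rewrite Nat.pow2_bits_eqb.
  case: (Nat.eqb_spec i j) => [<-|ne]; first by rewrite hcc.
  rewrite /cc; case: (y i); rewrite ?Nat.pow2_bits_eqb ?Nat.bits_0 //.
  by move/Nat.eqb_neq: ne => ->.
rewrite H conj_formula => /phiP [_ /(_ i)].
by simplb; rewrite hcc Nat.pow2_bits_eqb Nat.eqb_refl (tb_big hi); case: (x i); case: (y i).
Qed.

Lemma phi_open g b : openC (fun x => phi x g = b).
Proof.
move: g => [[a bb] c] x hx; exists (a + c) => z hz; rewrite -hx /phi.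
congr (_ && _); apply: eq_in_all => i; rewrite mem_iota => /andP[_ hi].
by rewrite hz.
Qed.

Lemma borel_BP (B : set (T3 -> bool)) : borel2 B -> BP (fun x => B (phi x)).
Proof.
pose P : set (set (T3 -> bool)) := fun B => BP (fun x => B (phi x)).
suff : <<s @cylinders T3 >> `<=` P by apply.
apply: smallest_sub.
  split.
  - rewrite /P; apply: BP_ext (BP_open (U := fun _ => False) _) => //.
  - move=> A hA; rewrite /P; apply: BP_ext (BP_compl hA) => z /=.
    by split=> [h|[_ h]].
  - move=> F hF; rewrite /P; apply: BP_ext (@BP_union (fun k x => F k (phi x)) hF) => z /=.
    by split=> [[k hk]|[k _ hk]]; exists k.
move=> A [g [b ->]]; rewrite /P; have := BP_open (@phi_open g b). apply: BP_ext. done.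
Qed.

Lemma nwdE (x0 : C) N : nwd (fun x => forall i, (N <= i)%N -> x i = x0 i).
Proof.
move=> x n; pose j := (n + N)%N.
exists (fun i => if i == j then ~~ x0 j else x i), j.+1; split; first by rewrite /j; lia.
split.
  move=> i hi; case: eqP => // e; exfalso; rewrite /j in e; lia.
move=> z hz hE; have h1 := hz j (ltnSn j); rewrite eqxx in h1.
have h2 := hE j (leq_addl n N); rewrite h2 in h1; by case: (x0 j) h1.
Qed.

Theorem proposition8p3 :
  exists (G : countType) (mul : G -> G -> G) (inv : G -> G) (one : G),
    [/\ is_group mul inv one, nilpotent_class2 mul inv & ~ conj_smooth mul inv one].
Proof.
exists (nat * nat * nat)%type, gmul, ginv, gone; split; [exact: is_group_g | exact: nil2 |].
move=> [f [fB fR]].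
have hA : forall n, BP (fun x => f (phi x) n = true).
  move=> n.
  have hB : borel2 [set z : nat -> bool | z n = true].
    by apply: sub_sigma_algebra; exists n, true.
  have [B' [hB' e]] := fB _ hB.
  apply: BP_ext (borel_BP hB') => x.
  have e' := congr1 (fun S => S (phi x)) e.
  split=> h.
    have : (Defs.Sub gmul ginv gone `&` f @^-1` [set z : nat -> bool | z n = true]) (phi x).
      by rewrite e'; split=> //; exact: phi_sub.
    by case.
  have : (B' `&` Defs.Sub gmul ginv gone) (phi x).
    by rewrite -e'; split=> //; exact: phi_sub.
  by case.
have inv : forall n p x, f (phi x) n = true -> f (phi (tau p x)) n = true.
  move=> n p x.
  by rewrite ((fR (phi x) (phi (tau p x)) (phi_sub x) (phi_sub _)).1 (conj_tau p x)).
have hv : forall n, exists v : bool, meager (fun x => f (phi x) n = ~~ v).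
  move=> n; case: (zero_one (hA n) (inv n)) => h; [exists false | exists true];
    apply: meager_sub h => x /=; by move=> ->.
have [v hv'] := choice hv.
have mM := meager_union hv'.
have [x0 hx0] := baire mM.
have e : forall y, ~ (exists n, f (phi y) n = ~~ v n) -> f (phi y) = v.
  move=> y hy; apply: funext => n; apply: NNPP => ne; apply: hy; exists n; move: ne.
  by case: (f (phi y) n); case: (v n).
have key : forall x, ~ (exists n, f (phi x) n = ~~ v n) ->
    exists N, forall i, (N <= i)%N -> x0 i = x i.
  move=> x hx; apply: conj_fin.
  apply/(fR _ _ (phi_sub x0) (phi_sub x)).
  by rewrite (e _ hx0) (e _ hx).
apply: not_meagerT.
apply: meager_sub (meager_union (M := fun k => if k is k'.+1 then
    (fun x => forall i, (k' <= i)%N -> x i = x0 i)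
    else (fun x => exists n, f (phi x) n = ~~ v n)) _) => [x _|].
  case: (pselect (exists n, f (phi x) n = ~~ v n)) => h; first by exists 0.
  have [N hN] := key x h; exists N.+1 => i hi; by rewrite hN.
by case=> [|k] //; apply: nwd_meager; apply: nwdE.
Qed.
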